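(* Fix an integer $k\geq1$ and $V=\{0,\ldots,k\}$. Let $\varphi$ be a Boolean function on $V$ with $\mathrm{eul}(\varphi)\geq0$. Then there exists a Boolean function $\varphi_{\min}$ on $V$ with $\varphi_{\min}\simeq\varphi$ all of whose satisfying valuations have even size.
   Context: A valuation is a subset $\nu\subseteq V$; $\nu^{(l)}$ is $\nu$ with membership of $l$ flipped. A Boolean function on $V$ is a map $\varphi:2^V\to\{\text{false},\text{true}\}$; $\mathrm{sat}(\varphi)$ is its set of satisfying valuations; $\mathrm{eul}(\varphi)=\sum_{\nu\in\mathrm{sat}(\varphi)}(-1)^{|\nu|}$. Write $\varphi\xrightarrow{+(\nu,l)}\varphi'$ if $\nu,\nu^{(l)}\notin\mathrm{sat}(\varphi)$ and $\mathrm{sat}(\varphi')=\mathrm{sat}(\varphi)\cup\{\nu,\nu^{(l)}\}$, and $\varphi\xrightarrow{-(\nu,l)}\varphi'$ if $\varphi'\xrightarrow{+(\nu,l)}\varphi$. Write $\varphi\xrightarrow{\pm}\varphi'$ if one of these holds for some $\nu,l$; $\simeq$ is the reflexive-transitive closure of $\xrightarrow{\pm}$ (an equivalence relation). *)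

(* Defs.v *)
(* V = {0,...,k} is 'I_k.+1; valuations are {set 'I_k.+1}. *)
From mathcomp Require Import all_boot all_order all_algebra.
From Stdlib Require Import Relations.
Set Implicit Arguments. Unset Strict Implicit. Unset Printing Implicit Defensive.
Import GRing.Theory Num.Theory.

Definition bfun (k : nat) := {set 'I_k.+1} -> bool.

Definition flip k (nu : {set 'I_k.+1}) (l : 'I_k.+1) : {set 'I_k.+1} :=
  if l \in nu then nu :\ l else l |: nu.

Definition sat k (phi : bfun k) : {set {set 'I_k.+1}} := [set nu | phi nu].

Definition eul k (phi : bfun k) : int :=
  (\sum_(nu in sat phi) (-1) ^+ #|nu|)%R.

Definition step_plus k (phi phi' : bfun k) (nu : {set 'I_k.+1}) (l : 'I_k.+1) : Prop :=
  nu \notin sat phi /\ flip nu l \notin sat phi /\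
  sat phi' = sat phi :|: [set nu; flip nu l].

Definition step_minus k (phi phi' : bfun k) nu l : Prop := step_plus phi' phi nu l.

Definition step_pm k (phi phi' : bfun k) : Prop :=
  exists nu l, step_plus phi phi' nu l \/ step_minus phi phi' nu l.

Definition bequiv k : relation (bfun k) := clos_refl_trans (bfun k) (@step_pm k).

(* Main.v *)
Require Import Defs.
From mathcomp Require Import all_boot all_order all_algebra.
From Stdlib Require Import Relations.
Import GRing.Theory Num.Theory.

Set Implicit Arguments. Unset Strict Implicit.
Section S.
Variable k : nat.
Implicit Types (S T U : {set {set 'I_k.+1}}) (nu mu : {set 'I_k.+1}) (l : 'I_k.+1).

Definition stepS S T : Prop := exists nu l,
  (nu \notin S /\ flip nu l \notin S /\ T = S :|: [set nu; flip nu l]) \/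
  (nu \notin T /\ flip nu l \notin T /\ S = T :|: [set nu; flip nu l]).
Definition reach := clos_refl_trans _ stepS.

Definition oc S := (\sum_(z in S) (odd #|z| : nat))%N.
Definition ec S := (\sum_(z in S) (~~ odd #|z| : nat))%N.
Definition D nu mu := [set i | (i \in nu) != (i \in mu)].

Lemma mem_flip nu l i : (i \in flip nu l) = if i == l then l \notin nu else i \in nu.
Proof.
rewrite /flip; case: ifP => h; rewrite !inE; case: eqP => [->|] //=; by rewrite h.
Qed.

Lemma odd_flip nu l : odd #|flip nu l| = ~~ odd #|nu|.
Proof.
rewrite /flip; case: ifP => h.
  by rewrite (cardsD1 l nu) h add1n /= negbK.
by rewrite cardsU1 h add1n.
Qed.

Lemma flip_neq nu l : flip nu l != nu.
Proof. apply/eqP => E; have := odd_flip nu l; rewrite E; by case: odd. Qed.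

Lemma D_flip nu mu l : l \in D nu mu -> D (flip nu l) mu = D nu mu :\ l.
Proof.
move=> Hl; apply/setP => i; rewrite !inE mem_flip; case: (i =P l) => [->|_] //=.
move: Hl; rewrite inE; by case: (l \in nu); case: (l \in mu).
Qed.

Lemma D0 nu mu : D nu mu = set0 -> nu = mu.
Proof.
move=> H; apply/setP => i; move/setP: H => /(_ i); rewrite !inE.
by case: (i \in nu); case: (i \in mu).
Qed.

Lemma add_pair S x l : x \notin S -> flip x l \notin S ->
  oc (S :|: [set x; flip x l]) = (oc S).+1 /\ ec (S :|: [set x; flip x l]) = (ec S).+1.
Proof.
move=> h1 h2.
have E : S :|: [set x; flip x l] = x |: (flip x l |: S).
  apply/setP => i; rewrite !inE.
  by case: (i \in S); case: (i == x); case: (i == flip x l).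
have hx : x \notin flip x l |: S by rewrite !inE negb_or eq_sym flip_neq.
rewrite /oc /ec E !big_setU1 //= odd_flip; case: (odd #|x|) => /=;
  by rewrite ?add0n ?add1n.
Qed.

Lemma rem_pair S x l : x \in S -> flip x l \in S ->
  stepS S (S :\ x :\ flip x l) /\
  (oc (S :\ x :\ flip x l)).+1 = oc S /\ (ec (S :\ x :\ flip x l)).+1 = ec S.
Proof.
move=> h1 h2; set U := S :\ x :\ flip x l.
have hx : x \notin U by rewrite !inE eqxx andbF.
have hy : flip x l \notin U by rewrite !inE eqxx.
have E : S = U :|: [set x; flip x l].
  apply/setP => i; rewrite !inE.
  case: (i =P x) => [->|_]; rewrite ?h1 ?orbT //.
  case: (i =P flip x l) => [->|_]; rewrite ?h2 ?orbT //=.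
  by rewrite orbF.
have [A B] := add_pair hx hy.
split; first by exists x, l; right.
by rewrite E A B.
Qed.

Lemma key n : forall S nu mu, #|D nu mu| < n -> nu \in S -> mu \in S ->
  odd #|nu| -> ~~ odd #|mu| ->
  exists T, reach S T /\ (oc T).+1 = oc S /\ (ec T).+1 = ec S.
Proof.
elim: n => [//|n IH] S nu mu Hd Hnu Hmu Hon Hom.
case: (set_0Vmem (D nu mu)) => [D00 | [l Hl]].
  by move: Hom; rewrite -(D0 D00) Hon.
case Hx1 : (flip nu l \in S).
  have [A [B C]] := rem_pair Hnu Hx1.
  by eexists; split; [apply: rt_step; exact A|].
have Dx1 := D_flip Hl.
case: (set_0Vmem (D (flip nu l) mu)) => [D00 | [l' Hl']].
  by move: Hx1; rewrite (D0 D00) Hmu.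
have Dx2 := D_flip Hl'.
set x1 := flip nu l in Hx1 Dx1 Hl' Dx2 *.
set x2 := flip x1 l' in Dx2 *.
have Hcard : #|D x2 mu| < n.
  move: Hd; rewrite Dx2 Dx1 (cardsD1 l (D nu mu)) Hl.
  move: Hl'; rewrite Dx1 => Hl'.
  rewrite (cardsD1 l' (D nu mu :\ l)) Hl'.
  rewrite /= !add1n !ltnS; exact: ltnW.
have Hox2 : odd #|x2| by rewrite /x2 /x1 !odd_flip negbK.
case Hx2 : (x2 \in S).
  exact: (IH S x2 mu).
set T := S :|: [set x1; flip x1 l'].
have [A1 B1] := add_pair (negbT Hx1) (negbT Hx2).
have HnuT : nu \in T by rewrite !inE Hnu.
have Hx1T : flip nu l \in T by rewrite !inE eqxx orbT.
have [St [A2 B2]] := rem_pair HnuT Hx1T.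
set U := T :\ nu :\ flip nu l in St A2 B2.
have Hx2U : x2 \in U.
  rewrite !inE eqxx !orbT andbT.
  apply/andP; split; first by rewrite /x2 flip_neq.
  by apply/eqP => E; rewrite E Hnu in Hx2.
have HmuU : mu \in U.
  rewrite !inE Hmu andbT.
  apply/andP; split.
    by apply/eqP => E; rewrite E in Hmu; rewrite Hmu in Hx1.
  by apply/eqP => E; rewrite E Hon in Hom.
have [W [HW [C1 C2]]] := IH U x2 mu Hcard Hx2U HmuU Hox2 Hom.
exists W; split.
  apply: rt_trans HW; apply: rt_trans (rt_step _ _ _ _ St).
  by apply: rt_step; exists x1, l'; left; rewrite Hx1 Hx2.
rewrite /T in A1 B1 A2 B2.
split.
  by apply/eqP; rewrite -eqSS C1 A2 A1.
by apply/eqP; rewrite -eqSS C2 B2 B1.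
Qed.

Lemma main_reach n : forall S, oc S = n -> oc S <= ec S ->
  exists T, reach S T /\ oc T = 0.
Proof.
elim: n => [|n IH] S Ho Hle.
  by exists S; split => //; apply: rt_refl.
case: (pickP [pred z | (z \in S) && odd #|z|]) => [nu /andP [Hnu Hon] | Hn].
  case: (pickP [pred z | (z \in S) && ~~ odd #|z|]) => [mu /andP [Hmu Hom] | Hn'].
    have [T [HT [C1 C2]]] := @key (#|D nu mu|).+1 S nu mu (ltnSn _) Hnu Hmu Hon Hom.
    have [T' [HT' H0]] : exists T', reach T T' /\ oc T' = 0.
      apply: IH.
        by apply/eqP; rewrite -eqSS C1 Ho.
      by move: Hle; rewrite -C1 -C2 ltnS.
    by exists T'; split => //; apply: rt_trans HT HT'.
  have : ec S = 0.
    rewrite /ec big1 // => z Hz; have := Hn' z; rewrite /= Hz /=.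
    by case: odd.
  by move=> E; move: Hle; rewrite E Ho.
have : oc S = 0.
  rewrite /oc big1 // => z Hz; have := Hn z; rewrite /= Hz /=.
  by move=> ->.
by rewrite Ho.
Qed.

Lemma transfer (phi : bfun k) T : reach (sat phi) T ->
  exists psi : bfun k, sat psi = T /\ bequiv psi phi.
Proof.
move/clos_rt_rtn1_iff; elim => [|U W Hs _ [psi [Hpsi Hb]]].
  by exists phi; split => //; apply: rt_refl.
have HsW : sat (fun nu => nu \in W) = W by apply/setP => x; rewrite inE.
exists (fun nu => nu \in W); split => //.
apply: rt_trans Hb; apply: rt_step.
case: Hs => nu [l [[h1 [h2 h3]] | [h1 [h2 h3]]]]; exists nu, l.
  right; rewrite /step_minus /step_plus HsW Hpsi; by [].
left; rewrite /step_plus HsW Hpsi; by [].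
Qed.

Lemma eul_eq (phi : bfun k) : eul phi = ((ec (sat phi))%:R - (oc (sat phi))%:R)%R.
Proof.
rewrite /eul /ec /oc !natr_sum -sumrB; apply: eq_bigr => nu _.
rewrite -signr_odd; by case: odd.
Qed.

End S.
Unset Implicit Arguments.

Theorem lemma6p5 (k : nat) (hk : (1 <= k)%N) (phi : bfun k)
  (heul : (0 <= eul phi)%R) :
  exists phimin : bfun k, bequiv phimin phi /\
    (forall nu, nu \in sat phimin -> ~~ odd #|nu|).
Proof.
have Hle : (oc (sat phi) <= ec (sat phi))%N.
  by move: heul; rewrite eul_eq subr_ge0 ler_nat.
have [T [HR HT]] := main_reach erefl Hle.
have [psi [Hs Hb]] := transfer HR.
exists psi; split => // nu; rewrite Hs => Hnu.
apply/negP => Ho; move: HT; by rewrite /oc (bigD1 nu) //= Ho add1n.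
Qed.
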